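(* Fix an agent $i$ with $\theta_i^*\in\Theta_i$ and $\sigma^2>0$. If $p_i(t)\sim\mathcal N(0,\sigma^2)$ and $x_i(t)=x_i^*(p_i(t))$, then there exists $\delta>0$ such that \[ \mathbb E\big[\xi_i(t)\xi_i(t)^\top\delta_i(t)\big]\succeq\delta\,\mathbb I_d. \]
   Context: $\mathcal X_i\subset\mathbb R$ is a compact interval with nonempty interior; $\Phi(x)=(x,x^2,\dots,x^d)^\top$; $\Theta_i=\{\theta\in\mathbb R^d: m_i\le\theta^\top\nabla^2\Phi(x)\le M_i\ \forall x\in\mathcal X_i\}$ for constants $0<m_i\le M_i$. The best response to incentive $p$ is $x_i^*(p)=\arg\min_{x\in\mathcal X_i}(\theta_i^{*\top}\Phi(x)+px)$. $\xi_i(t)=\nabla\Phi(x_i(t))$ and $\delta_i(t)=\mathbf 1\{x_i(t)\in\operatorname{int}\mathcal X_i\}$. *)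

(* Defs.v *)
From HB Require Import structures.
From mathcomp Require Import all_boot all_order all_algebra.
From mathcomp Require Import all_classical all_reals all_analysis.
Set Implicit Arguments. Unset Strict Implicit. Unset Printing Implicit Defensive.
Import Order.TTheory GRing.Theory Num.Theory.
Local Open Scope ring_scope.

Definition Phi {R : realType} (d : nat) (x : R) : 'cV[R]_d :=
  \col_(k < d) x ^+ k.+1.

Definition gradPhi {R : realType} (d : nat) (x : R) : 'cV[R]_d :=
  \col_(k < d) ((k.+1)%:R * x ^+ k).

Definition hessPhi {R : realType} (d : nat) (x : R) : 'cV[R]_d :=
  \col_(k < d) (((k.+1 * k)%N)%:R * x ^+ k.-1).

Definition Theta {R : realType} (d : nat) (a b m M : R) : set 'cV[R]_d :=
  [set theta | forall x : R, a <= x <= b ->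
     m <= (theta^T *m hessPhi d x) 0 0 <= M].

Definition cost {R : realType} (d : nat) (theta : 'cV[R]_d) (p x : R) : R :=
  (theta^T *m Phi d x) 0 0 + p * x.

Definition is_best_response {R : realType} (d : nat) (a b : R)
    (theta : 'cV[R]_d) (p x : R) : Prop :=
  a <= x <= b /\ forall y : R, a <= y <= b -> cost theta p x <= cost theta p y.

(* E[ xi xi^T delta ] where p ~ N(0, sigma^2), x = xs p, xi = nabla Phi(x),
   delta = 1{x in int [a,b]}; entrywise expectation. *)
Definition Exi {R : realType} (d : nat) (a b sigma : R) (xs : R -> R) : 'M[R]_d :=
  \matrix_(j < d, k < d)
    Rintegral (normal_prob 0 sigma) setT
      (fun p => ((gradPhi d (xs p) *m (gradPhi d (xs p))^T) j k)
                * (if (a < xs p) && (xs p < b) then 1 else 0)).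

(* Positive semidefiniteness; A >= B in Loewner order iff psd (A - B). *)
Definition psd {R : realType} (d : nat) (A : 'M[R]_d) : Prop :=
  forall v : 'cV[R]_d, 0 <= (v^T *m A *m v) 0 0.
Arguments Theta {R} d a b m M.

(* Main.v *)
Require Import Defs.
From HB Require Import structures.
From mathcomp Require Import all_boot all_order all_algebra.
From mathcomp Require Import all_classical all_reals all_analysis.
From mathcomp Require Import measurable_realfun polyrcf.
From mathcomp Require Import ring lra.
Import Order.TTheory GRing.Theory Num.Theory.
Import numFieldNormedType.Exports.
Local Open Scope ring_scope.


Section Poly.
Variables (R : realType) (d : nat) (theta : 'cV[R]_d).

Lemma deriv_sumr (F : 'I_d -> {poly R}) :
  (\sum_(k < d) F k)^`() = \sum_(k < d) (F k)^`().
Proof. by apply: big_morph; [exact: derivD | exact: deriv0]. Qed.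

Definition PF : {poly R} := \sum_(k < d) theta k 0 *: 'X^(k.+1).
Definition PH : {poly R} := \sum_(k < d) (theta k 0 * k.+1%:R) *: 'X^k.

Lemma PF_eval x : (theta^T *m Phi d x) 0 0 = PF.[x].
Proof.
rewrite !mxE /PF horner_sum; apply: eq_bigr => k _.
by rewrite !mxE hornerZ hornerXn.
Qed.

Lemma PH_eval x : (theta^T *m gradPhi d x) 0 0 = PH.[x].
Proof.
rewrite !mxE /PH horner_sum; apply: eq_bigr => k _.
by rewrite !mxE hornerZ hornerXn mulrA.
Qed.

Lemma PF_deriv : PF^`() = PH.
Proof.
rewrite /PF /PH deriv_sumr; apply: eq_bigr => k _ /=.
by rewrite derivZ derivXn /= -scaler_nat scalerA.
Qed.

Lemma PH_deriv_eval x : (theta^T *m hessPhi d x) 0 0 = (PH^`()).[x].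
Proof.
rewrite !mxE /PH deriv_sumr horner_sum; apply: eq_bigr => k _.
rewrite !mxE derivZ derivXn hornerZ hornerMn hornerXn natrM.
rewrite -mulr_natr; ring.
Qed.

End Poly.
Arguments PF {R d}.
Arguments PH {R d}.


Section Cvx.
Variables (R : realType) (d : nat) (a b m M : R) (theta : 'cV[R]_d).
Hypothesis m0 : 0 < m.
Hypothesis hT : Theta d a b m M theta.

Let F := PF theta.
Let H := PH theta.

Lemma H_incr x y : a <= x -> x < y -> y <= b -> H.[x] < H.[y].
Proof.
move=> ax xy yb; have [c cI E] := poly_mvt H xy.
move: cI; rewrite in_itv /= => /andP[xc cy].
have /andP[mc _] : m <= (theta^T *m hessPhi d c) 0 0 <= M.
  apply: hT; apply/andP; split; [exact: le_trans (ltW xc) | exact: le_trans (ltW cy) _].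
rewrite PH_deriv_eval -/H in mc.
have : 0 < H^`().[c] * (y - x) by rewrite mulr_gt0 ?subr_gt0 // (lt_le_trans m0).
by rewrite -E subr_gt0.
Qed.

Lemma F_cvx x y : a <= x <= b -> a <= y <= b -> x != y ->
  H.[x] * (y - x) < F.[y] - F.[x].
Proof.
move=> /andP[ax xb] /andP[ay yb]; rewrite neq_lt => /orP[xy|yx].
- have [c cI E] := poly_mvt F xy; rewrite E PF_deriv -/H.
  move: cI; rewrite in_itv /= => /andP[xc cy].
  rewrite ltr_pM2r ?subr_gt0 //; apply: H_incr => //.
  exact: le_trans (ltW cy) _.
- have [c cI E] := poly_mvt F yx.
  have -> : F.[y] - F.[x] = - (F.[x] - F.[y]) by ring.
  rewrite E PF_deriv -/H.
  move: cI; rewrite in_itv /= => /andP[yc cx].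
  have : H.[c] < H.[x] by apply: H_incr => //; exact: le_trans (ltW yc).
  have : 0 < x - y by rewrite subr_gt0.
  move=> h1 h2.
  have : H.[c] * (x - y) < H.[x] * (x - y) by rewrite ltr_pM2r.
  lra.
Qed.

Lemma cost_eval p x : cost theta p x = F.[x] + p * x.
Proof. by rewrite /cost PF_eval. Qed.

Lemma BR_in p xlo xhi y : a <= xlo -> xlo <= xhi -> xhi <= b ->
  - H.[xhi] <= p -> p <= - H.[xlo] ->
  is_best_response a b theta p y -> xlo <= y <= xhi.
Proof.
move=> axl xlh xhb p1 p2 [/andP[ay yb] hbr].
have axh : a <= xhi by exact: le_trans xlh.
have xlb : xlo <= b by exact: le_trans xlh xhb.
apply/andP; split; rewrite leNgt; apply/negP => hy.
- have h2 := hbr xlo; rewrite !cost_eval in h2.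
  have h1 := @F_cvx xlo y.
  have {h1} h1 : H.[xlo] * (y - xlo) < F.[y] - F.[xlo].
    apply: h1; [by rewrite axl xlb|by rewrite ay yb|by rewrite gt_eqF].
  have {h2} h2 := h2 (introT andP (conj axl xlb)).
  have h3 : 0 <= (- H.[xlo] - p) * (xlo - y) by rewrite mulr_ge0 // subr_ge0 // ltW.
  nra.
- have h2 := hbr xhi; rewrite !cost_eval in h2.
  have h1 := @F_cvx xhi y.
  have {h1} h1 : H.[xhi] * (y - xhi) < F.[y] - F.[xhi].
    apply: h1; [by rewrite axh xhb|by rewrite ay yb|by rewrite lt_eqF].
  have {h2} h2 := h2 (introT andP (conj axh xhb)).
  have h3 : 0 <= (p + H.[xhi]) * (y - xhi).
    by apply: mulr_ge0; [lra | rewrite subr_ge0 ltW].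
  nra.
Qed.

Lemma BR_mono (xs : R -> R) :
  (forall p, is_best_response a b theta p (xs p)) -> nonincreasing_fun xs.
Proof.
move=> hbr x y; rewrite le_eqVlt => /orP[/eqP->//|xy].
have [h1 g1] := hbr x; have [h2 g2] := hbr y.
have e1 := g1 _ h2; have e2 := g2 _ h1.
rewrite !cost_eval in e1 e2.
rewrite leNgt; apply/negP => hl.
have : 0 < (y - x) * (xs y - xs x) by rewrite mulr_gt0 // subr_gt0.
nra.
Qed.

End Cvx.

Section Part3.
Local Open Scope classical_set_scope.
Local Open Scope ring_scope.

Lemma entry_le_norm (R : realType) p q (X : 'M[R]_(p, q)) i j : `|X i j| <= `|X|.
Proof.
rewrite [leRHS]/Num.norm /= mx_normrE; apply/bigmax_geP; right => /=.
by exists (i, j).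
Qed.

Lemma cont_sum (R : realType) (T : topologicalType) n (F : 'I_n -> T -> R) :
  (forall i, continuous (F i)) -> continuous (fun x => \sum_(i < n) F i x).
Proof.
elim: n F => [|n IH] F hF.
  under eq_fun do rewrite big_ord0; exact: cst_continuous.
under eq_fun do rewrite big_ord_recr /=.
move=> x; apply: (@continuousD _ R^o _ (fun x => \sum_(i < n) F (widen_ord (leqnSn n) i) x) (F ord_max)).
  by apply: IH => i; exact: hF.
exact: hF.
Qed.

Lemma quad_scale (R : realType) n (A : 'M[R]_n) (l : R) (w : 'rV[R]_n) :
  ((l *: w) *m A *m (l *: w)^T) 0 0 = l ^+ 2 * (w *m A *m w^T) 0 0.
Proof.
by rewrite linearZ /= -scalemxAl -scalemxAl -scalemxAr !mxE expr2 mulrA.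
Qed.

Lemma unif_pd (R : realType) d (A : 'M[R]_d) :
  (forall v : 'cV[R]_d, v != 0 -> 0 < (v^T *m A *m v) 0 0) ->
  exists delta : R, 0 < delta /\
    (forall v : 'cV[R]_d, 0 <= (v^T *m (A - delta%:M) *m v) 0 0).
Proof.
case: d A => [|n] A hpos.
  by exists 1; split => // v; rewrite !mxE big_ord0.
pose f (w : 'rV[R]_n.+1) := (w *m A *m w^T) 0 0.
pose S := [set w : 'rV[R]_n.+1 | `|w| = 1].
have S0 : S !=set0.
  pose w0 : 'rV[R]_n.+1 := const_mx 1.
  have w00 : `|w0| != 0.
    rewrite normr_eq0; apply/negP => /eqP/matrixP/(_ 0 0).
    by rewrite !mxE => /eqP; rewrite oner_eq0.
  exists (`|w0|^-1 *: w0); rewrite /S /= normrZ ger0_norm ?invr_ge0 //.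
  by rewrite mulVf.
have cS : compact S.
  apply: bounded_closed_compact.
    exists 1; split => // M M1 w Sw /=; rewrite Sw ltW //.
  rewrite (_ : S = (@Num.norm _ _) @^-1` [set 1]) //.
  apply: preimage_closed; last first.
    apply: compact_closed; [exact: Rhausdorff | exact: compact_set1].
  by move=> x _; exact: norm_continuous.
have cf : continuous f.
  have -> : f = fun w => \sum_(i < n.+1) \sum_(j < n.+1) (w 0 j * A j i * w 0 i).
    apply/funext => w; rewrite /f !mxE; apply: eq_bigr => i _.
    rewrite !mxE big_distrl /=; apply: eq_bigr => j _; done.
  apply: cont_sum => i; apply: cont_sum => j.
  move=> x.
  apply: (@continuousM R _ (fun w : 'rV[R]_n.+1 => w 0 j * A j i) (fun w => w 0 i)).
    apply: (@continuousM R _ (fun w : 'rV[R]_n.+1 => w 0 j) (fun w => A j i)).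
      exact: coord_continuous.
    exact: cst_continuous.
  exact: coord_continuous.
have [c cS' cmin] := compact_EVT_min S0 cS (continuous_subspaceT cf).
have c1 : `|c| = 1 by move: cS'; rewrite inE.
have fc0 : 0 < f c.
  have := hpos c^T; rewrite trmxK; apply.
  apply/negP => /eqP c0; move: c1.
  by rewrite -(trmxK c) c0 trmx0 normr0 => /eqP; rewrite eq_sym oner_eq0.
have n0 : (0 : R) < n.+1%:R by rewrite ltr0n.
exists (f c / n.+1%:R); split; first by rewrite divr_gt0.
move=> v; have [->|v0] := eqVneq v 0.
  by rewrite trmx0 !mul0mx mxE.
set l := `|v^T|.
have l0 : 0 < l.
  rewrite normr_gt0; apply: contra v0 => /eqP h.
  by rewrite -(trmxK v) h trmx0.
have key : f c <= f (l^-1 *: v^T).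
  apply: cmin; rewrite inE /S /= normrZ ger0_norm ?invr_ge0 ?ltW //.
  by rewrite mulVf // gt_eqF.
rewrite /f quad_scale trmxK in key.
rewrite mulmxBr mulmxBl mul_mx_scalar -scalemxAl.
set Q := (v^T *m A *m v) 0 0 in key *.
rewrite mxE -/Q !mxE.
have hs : \sum_j v^T 0 j * v j 0 <= n.+1%:R * l ^+ 2.
  rewrite mulr_natl; apply: (le_trans (y := \sum_(j < n.+1) l ^+ 2)); last first.
    by rewrite sumr_const card_ord.
  apply: ler_sum => j _.
  rewrite mxE expr2.
  apply: (le_trans (ler_norm _)); rewrite normrM.
  have : `|v j 0| <= l by rewrite /l (le_trans _ (@entry_le_norm _ _ _ v^T 0 j)) // mxE.
  by move=> h; apply: ler_pM.
have hQ : f c * l ^+ 2 <= Q.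
  have h2 : 0 < l ^+ 2 by rewrite exprn_gt0.
  rewrite -(ler_pM2r h2) mulrAC exprVn mulVf ?mul1r ?gt_eqF // in key.
set s := \sum_j _ in hs *.
have : f c / n.+1%:R * s <= f c / n.+1%:R * (n.+1%:R * l ^+ 2).
  by rewrite ler_pM2l // divr_gt0.
rewrite mulrA divfK ?gt_eqF // => h.
move: h hQ; set z := f c / _ * s; set w := f c * _ => h1 h2.
rewrite subr_ge0; exact: le_trans h1 h2.
Qed.

End Part3.

Section Part4.
Local Open Scope classical_set_scope.
Local Open Scope ring_scope.

Section Integ.
Variables (R : realType) (sigma : R).
Local Notation P := (normal_prob (0:R) sigma).
Local Notation RI := (Rintegral P setT).

Lemma bint (g : R -> R) C : measurable_fun setT g -> (forall p, `|g p| <= C) ->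
  P.-integrable setT (EFin \o g).
Proof.
move=> mg hb; apply: measurable_bounded_integrable => //.
  by apply: (le_lt_trans (probability_le1 _ measurableT)); exact: ltry.
exists C; split; first by rewrite num_real.
move=> M CM x _ /=; by rewrite (le_trans (hb x)) // ltW.
Qed.

Lemma Rint_sum n (F : 'I_n -> R -> R) :
  (forall i, P.-integrable setT (EFin \o F i)) ->
  P.-integrable setT (EFin \o (fun p => \sum_(i < n) F i p)) /\
  RI (fun p => \sum_(i < n) F i p) = \sum_(i < n) RI (F i).
Proof.
elim: n F => [|n IH] F hF.
  split.
    apply: (eq_integrable measurableT (cst 0%E)); last exact: integrable0.
    by move=> x _; rewrite /= big_ord0.
  rewrite big_ord0 /Rintegral.
  under eq_integral do rewrite big_ord0.
  by rewrite integral0.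
have [i1 e1] := IH (fun i => F (widen_ord (leqnSn n) i)) (fun i => hF _).
split.
  have := integrableD measurableT i1 (hF ord_max).
  apply: eq_integrable => // x _; by rewrite /= big_ord_recr.
rewrite big_ord_recr /= -e1 -RintegralD //.
by apply: eq_Rintegral => x _; rewrite big_ord_recr.
Qed.

End Integ.

End Part4.

Section Part5.
Local Open Scope classical_set_scope.
Local Open Scope ring_scope.

Lemma normal_itv_pos (R : realType) (sigma p1 p2 : R) : 0 < sigma -> p1 < p2 ->
  0 < fine (normal_prob 0 sigma `[p1, p2]).
Proof.
move=> s0 p12.
set c0 := normal_peak sigma * expR (- (p1 ^+ 2 + p2 ^+ 2) / (sigma ^+ 2 *+ 2)).
have c00 : 0 < c0 by rewrite mulr_gt0 ?expR_gt0 // normal_peak_gt0 // gt_eqF.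
have low : ((c0 * (p2 - p1))%:E <= normal_prob 0 sigma `[p1, p2])%E.
  rewrite /normal_prob.
  have -> : ((c0 * (p2 - p1))%:E = \int[lebesgue_measure]_(x in `[p1, p2]) (cst c0%:E) x)%E.
    rewrite integral_cst; last exact: measurable_itv.
    have := lebesgue_measure_itv `[p1, p2]; rewrite /= lte_fin p12 => ->.
    by rewrite -EFinD EFinM.
  apply: ge0_le_integral.
  - exact: measurable_itv.
  - by move=> x _; rewrite lee_fin ltW.
  - exact: measurable_cst.
  - apply/measurable_EFinP; apply: measurable_funTS; exact: measurable_normal_pdf.
  - move=> x; rewrite /= in_itv /= => /andP[h1 h2].
    rewrite lee_fin normal_pdfE ?gt_eqF // ler_pM2l ?normal_peak_gt0 ?gt_eqF //.
    rewrite /normal_fun ler_expR subr0 !mulNr lerN2.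
    rewrite ler_pM2r ?invr_gt0 ?pmulrn_lgt0 ?exprn_gt0 //.
    have H : forall y : R, p1 <= y -> y <= p2 -> y ^+ 2 <= p1 ^+ 2 + p2 ^+ 2.
      move=> y hy1 hy2; case: (lerP 0 y) => hy; nra.
    exact: H.
apply: fine_gt0; apply/andP; split.
  by apply: lt_le_trans low; rewrite lte_fin mulr_gt0 // subr_gt0.
apply: le_lt_trans (ltry 1%R).
apply: probability_le1. exact: measurable_itv.
Qed.

End Part5.

Section Part6.
Local Open Scope classical_set_scope.
Local Open Scope ring_scope.

Section Main.
Variables (R : realType) (d : nat) (a b m M sigma : R) (theta : 'cV[R]_d) (xs : R -> R).
Hypotheses (ab : a < b) (m0 : 0 < m) (hT : Theta d a b m M theta) (s0 : 0 < sigma)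
  (hbr : forall p, is_best_response a b theta p (xs p)).

Local Notation P := (normal_prob (0:R) sigma).
Local Notation RI := (Rintegral P setT).

Definition ind (x : R) : R := if (a < x) && (x < b) then 1 else 0.

Lemma xs_in p : a <= xs p <= b.
Proof. by case: (hbr p). Qed.

Lemma mxs : measurable_fun setT xs.
Proof. apply: nonincreasing_measurable => //; exact: BR_mono hbr. Qed.

Lemma ind_indic : ind = \1_(`]a, b[) .
Proof.
apply/funext => x; rewrite /ind indicE.
rewrite (_ : (x \in `]a, b[%classic) = (a < x < b)); first by case: (a < x < b).
apply/idP/idP; [by rewrite inE /= in_itv | by move=> h; rewrite inE /= in_itv].
Qed.

Lemma mind : measurable_fun setT ind.
Proof. rewrite ind_indic; apply: measurable_indic; exact: measurable_itv. Qed.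

Lemma G_entry j k (x : R) : (gradPhi d x *m (gradPhi d x)^T) j k
  = (j.+1%:R * x ^+ j) * (k.+1%:R * x ^+ k).
Proof. by rewrite !mxE big_ord1 !mxE. Qed.

Let B := `|a| + `|b|.

Lemma xs_bd p : `|xs p| <= B.
Proof.
have /andP[h1 h2] := xs_in p; rewrite /B.
rewrite ler_norml; apply/andP; split.
  have := ler_norm (- a); rewrite normrN; have := normr_ge0 b; lra.
have := ler_norm b; have := normr_ge0 a; lra.
Qed.

Lemma powbd p n : `|xs p ^+ n| <= B ^+ n.
Proof.
rewrite normrX; apply: lerXn2r; rewrite ?nnegrE ?xs_bd //.
by rewrite /B addr_ge0.
Qed.

Lemma f_int j k : P.-integrable setT
  (EFin \o (fun p => (gradPhi d (xs p) *m (gradPhi d (xs p))^T) j k * ind (xs p))).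
Proof.
apply: (@bint _ _ _ ((j.+1%:R * B ^+ j) * (k.+1%:R * B ^+ k))).
  rewrite (_ : (fun p => _) = (fun x => (j.+1%:R * x ^+ j) * (k.+1%:R * x ^+ k) * ind x) \o xs).
    apply: measurableT_comp; last exact: mxs.
    apply: measurable_funM; last exact: mind.
    apply: measurable_funM; apply: measurable_funM => //;
      exact: measurable_funX.
  by apply/funext => p; rewrite /= G_entry.
move=> p; rewrite G_entry normrM.
have hi : `|ind (xs p)| <= 1 by rewrite /ind; case: ifP; rewrite ?normr1 ?normr0.
rewrite -[X in _ <= X]mulr1; apply: ler_pM => //.
rewrite normrM; apply: ler_pM => //; rewrite normrM; apply: ler_pM => //;
  by rewrite ?normr_nat ?powbd.
Qed.

Let fe j k := fun p => (gradPhi d (xs p) *m (gradPhi d (xs p))^T) j k * ind (xs p).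

Lemma int_scale c (f : R -> R) : P.-integrable setT (EFin \o f) ->
  P.-integrable setT (EFin \o (fun p => c * f p)).
Proof.
move=> hf; have := integrableZl measurableT c hf.
by apply: eq_integrable => // x _.
Qed.

Lemma sq_expand (v : 'cV[R]_d) (x : R) : ((PH v).[x]) ^+ 2 * ind x =
  \sum_(k < d) \sum_(j < d) (v j 0 * v k 0) *
     ((gradPhi d x *m (gradPhi d x)^T) j k * ind x).
Proof.
rewrite -PH_eval mxE expr2 mulr_suml mulr_suml exchange_big /=.
apply: eq_bigr => k _; rewrite mulr_sumr mulr_suml.
apply: eq_bigr => j _; rewrite G_entry !mxE; ring.
Qed.

Lemma quad_eq (v : 'cV[R]_d) : (v^T *m Exi d a b sigma xs *m v) 0 0 =
  RI (fun p => ((PH v).[xs p]) ^+ 2 * ind (xs p)).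
Proof.
under eq_Rintegral do rewrite sq_expand.
have hin k : forall j, P.-integrable setT (EFin \o (fun p => (v j 0 * v k 0) * fe j k p)).
  by move=> j; apply: int_scale; exact: f_int.
have hout : forall k, P.-integrable setT (EFin \o (fun p => \sum_(j < d) (v j 0 * v k 0) * fe j k p)).
  by move=> k; exact: (@Rint_sum R sigma d (fun j p => (v j 0 * v k 0) * fe j k p) (hin k)).1.
rewrite (@Rint_sum R sigma d (fun k p => \sum_(j < d) (v j 0 * v k 0) * fe j k p) hout).2.
rewrite mxE; apply: eq_bigr => k _.
rewrite (@Rint_sum R sigma d (fun j p => (v j 0 * v k 0) * fe j k p) (hin k)).2 mxE mulr_suml; apply: eq_bigr => j _.
rewrite RintegralZl //; last exact: f_int.
by rewrite !mxE; ring.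
Qed.

Lemma PH_neq0 (v : 'cV[R]_d) : v != 0 -> PH v != 0.
Proof.
apply: contra => /eqP h; apply/eqP/matrixP => j i; rewrite (ord1 i) mxE.
have := congr1 (fun q : {poly R} => q`_j) h.
rewrite coef0 /PH coef_sum (bigD1 j) //= coefZ coefXn eqxx mulr1 big1 ?addr0.
  by move/eqP; rewrite mulf_eq0 pnatr_eq0 orbF => /eqP.
move=> k kj; rewrite coefZ coefXn.
suff -> : (j == k :> nat) = false by rewrite mulr0.
by apply/negbTE; rewrite eq_sym.
Qed.

Lemma h_int (v : 'cV[R]_d) :
  P.-integrable setT (EFin \o (fun p => ((PH v).[xs p]) ^+ 2 * ind (xs p))).
Proof.
have hin k : forall j, P.-integrable setT (EFin \o (fun p => (v j 0 * v k 0) * fe j k p)).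
  by move=> j; apply: int_scale; exact: f_int.
have hout : forall k, P.-integrable setT (EFin \o (fun p => \sum_(j < d) (v j 0 * v k 0) * fe j k p)).
  by move=> k; exact: (@Rint_sum R sigma d (fun j p => (v j 0 * v k 0) * fe j k p) (hin k)).1.
have := (@Rint_sum R sigma d (fun k p => \sum_(j < d) (v j 0 * v k 0) * fe j k p) hout).1.
by apply: eq_integrable => // p _ /=; rewrite sq_expand.
Qed.

Lemma hpos (v : 'cV[R]_d) : v != 0 ->
  0 < RI (fun p => ((PH v).[xs p]) ^+ 2 * ind (xs p)).
Proof.
move=> v0; set Q := PH v.
have Q0 : Q != 0 := PH_neq0 v v0.
set r := next_root Q a b.
have ar : a < r := next_root_gt ab Q0.
have rb : r <= b.
  have := next_root_in Q a b; rewrite in_itv /= => /andP[_].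
  by rewrite max_l // ltW.
set x0 := (a + r) / 2.
have x0in : x0 \in `]a, r[ by apply: mid_in_itv.
have nr : ~~ root Q x0 := next_noroot x0in.
move: x0in; rewrite in_itv /= => /andP[ax0 x0r].
have x0b : x0 < b by exact: lt_le_trans rb.
set e := `|Q.[x0]| / 2.
have e0 : 0 < e by rewrite divr_gt0 // normr_gt0.
have [dl dl0 hcont] := poly_cont x0 Q e0.
set eta := Num.min (dl / 2) ((b - x0) / 2).
have eta0 : 0 < eta by rewrite lt_min !divr_gt0 // subr_gt0.
have eta1 : eta <= dl / 2 by rewrite /eta ge_min lexx.
have eta2 : eta <= (b - x0) / 2 by rewrite /eta ge_min lexx orbT.
have etad : eta < dl by lra.
have etab : x0 + eta < b by lra.
set xhi := x0 + eta.
have x0h : x0 < xhi by rewrite ltrDl.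
set p1 := - (PH theta).[xhi].
set p2 := - (PH theta).[x0].
have p12 : p1 < p2.
  rewrite ltrN2; apply: (@H_incr R d a b m M theta m0 hT) => //; exact: ltW.
set c := e ^+ 2.
set I := `[p1, p2]%classic.
have mI : measurable I by exact: measurable_itv.
have lowb : forall p, c * \1_I p <= ((PH v).[xs p]) ^+ 2 * ind (xs p).
  move=> p; rewrite indicE; case: (boolP (p \in I)) => pI; last first.
    by rewrite mulr0 mulr_ge0 ?sqr_ge0 // /ind; case: ifP.
  rewrite mulr1.
  move: pI; rewrite /I inE /= in_itv /= => /andP[hp1 hp2].
  have /andP[hx1 hx2] := @BR_in R d a b m M theta m0 hT p x0 xhi (xs p) (ltW ax0) (ltW x0h) (ltW etab) hp1 hp2 (hbr p).
  have -> : ind (xs p) = 1.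
    rewrite /ind ifT //; apply/andP; split; first exact: (lt_le_trans ax0 hx1).
    exact: (le_lt_trans hx2 etab).
  rewrite mulr1.
  have hd : `|xs p - x0| < dl.
    rewrite ger0_norm ?subr_ge0 //; apply: (le_lt_trans _ etad).
    rewrite lerBlDl; exact: hx2.
  have := hcont _ hd; rewrite -/Q => hq.
  have hq2 : e <= `|Q.[xs p]|.
    have := ler_normB Q.[xs p] (Q.[xs p] - Q.[x0]).
    rewrite (_ : Q.[xs p] - (Q.[xs p] - Q.[x0]) = Q.[x0]); last by ring.
    move: hq; rewrite /e; lra.
  rewrite -real_normK ?num_real //; apply: lerXn2r => //;
    by rewrite nnegrE ltW.
have iI : P.-integrable setT (EFin \o (fun p => c * \1_I p)).
  apply: int_scale; apply: (@bint _ _ _ 1).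
    exact: measurable_indic.
  by move=> p; rewrite indicE; case: (p \in I); rewrite ?normr1 ?normr0.
have := le_Rintegral measurableT iI (h_int v) (fun p _ => lowb p).
apply: lt_le_trans.
rewrite RintegralZl //; last first.
  apply: (@bint _ _ _ 1); first exact: measurable_indic.
  by move=> p; rewrite indicE; case: (p \in I); rewrite ?normr1 ?normr0.
rewrite mulr_gt0 ?exprn_gt0 //.
rewrite /Rintegral integral_indic // setIT.
exact: normal_itv_pos.
Qed.

End Main.

End Part6.


Theorem lemma2 (R : realType) (d : nat) (a b m M sigma : R)
  (theta : 'cV[R]_d) (xs : R -> R) :
  a < b -> 0 < m -> m <= M ->
  Theta d a b m M theta ->
  0 < sigma ->
  (forall p : R, is_best_response a b theta p (xs p)) ->
  exists delta : R, 0 < delta /\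
    psd (Exi d a b sigma xs - delta%:M).
Proof.
move=> ab m0 mM hT s0 hbr.
have hp : forall v : 'cV[R]_d, v != 0 -> 0 < (v^T *m Exi d a b sigma xs *m v) 0 0.
  move=> v v0; rewrite (@quad_eq R d a b sigma theta xs hbr v).
  exact: (@hpos R d a b m M sigma theta xs ab m0 hT s0 hbr v v0).
have [delta [d0 hd]] := @unif_pd R d (Exi d a b sigma xs) hp.
by exists delta; split.
Qed.
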